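(* Let $G$ and $H$ be graphs on the same number $n$ of vertices, and suppose $G$ is regular. If $\lambda(G)\ge\lambda(H)$, then for every integer $s\ge 1$, \[ \lambda(G\vee\overline{K}_s)\ge \lambda(H\vee\overline{K}_s). \]
   Context: $\lambda(\cdot)$ is the spectral radius of the adjacency matrix; $\overline{K}_s$ is the edgeless graph on $s$ vertices; $G\vee H$ denotes the join, obtained from disjoint copies of $G$ and $H$ by adding all edges between them. *)

(* Defs.v *)
From HB Require Import structures.
From mathcomp Require Import all_boot all_order all_algebra.
From mathcomp Require Import boolp classical_sets reals.
Set Implicit Arguments. Unset Strict Implicit. Unset Printing Implicit Defensive.
Import Order.TTheory GRing.Theory Num.Theory.
Local Open Scope ring_scope.
Local Open Scope classical_set_scope.

Record graph (n : nat) := Graph {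
  gadj :> rel 'I_n;
  gadj_sym : symmetric gadj;
  gadj_irr : irreflexive gadj }.

Definition regular n (G : graph n) : Prop :=
  exists d : nat, forall v : 'I_n, #|[set w | G v w]| = d.

Definition edgeless (s : nat) : graph s :=
  @Graph s (fun _ _ => false) (fun _ _ => erefl) (fun _ => erefl).

Definition join_rel m k (G : graph m) (H : graph k) : rel 'I_(m + k) :=
  fun x y => match split x, split y with
             | inl a, inl b => G a b
             | inr a, inr b => H a b
             | _, _ => true
             end.

Lemma join_sym m k (G : graph m) (H : graph k) : symmetric (join_rel G H).
Proof.
move=> x y; rewrite /join_rel.
by case: (split x) => a; case: (split y) => b //; apply: gadj_sym.
Qed.

Lemma join_irr m k (G : graph m) (H : graph k) : irreflexive (join_rel G H).
Proof.
move=> x; rewrite /join_rel.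
by case: (split x) => a; apply: gadj_irr.
Qed.

Definition gjoin m k (G : graph m) (H : graph k) : graph (m + k) :=
  @Graph (m + k) (join_rel G H) (@join_sym m k G H) (@join_irr m k G H).

Definition adjmx (R : realType) n (G : graph n) : 'M[R]_n :=
  \matrix_(i, j) (G i j : nat)%:R.

(* For symmetric real
   matrices (such as adjacency matrices) all eigenvalues are real, so it is
   the supremum of |mu| over the real eigenvalues mu. *)
Definition specrad (R : realType) n (A : 'M[R]_n) : R :=
  sup [set `|mu| | mu in [set mu : R | eigenvalue A mu]].

Definition lambda (R : realType) n (G : graph n) : R := specrad (adjmx R G).

(* Main.v *)
Require Import Defs.
From HB Require Import structures.
From mathcomp Require Import all_boot all_order all_algebra.
From mathcomp Require Import boolp classical_sets reals.
From mathcomp Require Import complex.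
From mathcomp Require Import ring lra.
Import Order.TTheory GRing.Theory Num.Theory.
Local Open Scope ring_scope.

Section Key.
Local Open Scope sesquilinear_scope.
Variable R : realType.
Local Notation C := (R[i]).
Local Notation f := (real_complex R).

Lemma eig_complex n (A : 'M[R]_n) (k : R) :
  eigenvalue (map_mx f A) (f k) -> eigenvalue A k.
Proof.
by rewrite !eigenvalue_root_char -map_char_poly fmorph_root.
Qed.

Lemma trC_real m p (x : 'M[R]_(m, p)) : (map_mx f x) ^t* = map_mx f x^T.
Proof.
apply/matrixP => i j; rewrite !mxE; apply/CrealP/complex_realP.
by exists (x j i).
Qed.

Lemma trC_mul m p q (X : 'M[C]_(m, p)) (Y : 'M[C]_(p, q)) :
  (X *m Y) ^t* = Y ^t* *m X ^t*.
Proof. by rewrite trmx_mul map_mxM. Qed.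

Lemma quad_bound n (A : 'M[R]_n) (d : R) :
  A^T = A -> (forall mu, eigenvalue A mu -> `|mu| <= d) ->
  forall x : 'rV[R]_n, `|(x *m A *m x^T) 0 0| <= d * (x *m x^T) 0 0.
Proof.
move=> symA eigA x.
have symC : map_mx f A \is symmetricmx.
  apply/is_hermitianmxP; rewrite expr0 scale1r map_mx_id //.
  by rewrite map_trmx symA.
have realC : map_mx f A \is a realmx.
  by apply/mxOverP => i j; rewrite mxE; apply/complex_realP; exists (A i j).
have hermC := realsym_hermsym symC realC.
have [P [D [PU [Hdec DRe]]]] : exists (P : 'M[C]_n) (D : 'rV[C]_n), P \is unitarymx /\
   map_mx f A = P^t* *m diag_mx D *m P /\ forall i, D 0 i \is Num.real.
  exists (spectralmx (map_mx f A)), (spectral_diag (map_mx f A)).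
  split; first exact: spectral_unitarymx.
  split; last by move=> i; apply: (mxOverP (hermitian_spectral_diag_real hermC)).
  rewrite -invmx_unitary; last exact: spectral_unitarymx.
  exact/orthomx_spectralP/hermitian_normalmx.
have PPt : P *m P^t* = 1%:M by apply/unitarymxP.
have PtP : P^t* *m P = 1%:M.
  by rewrite -invmx_unitary // mulVmx // unitarymx_unit.
have DR : forall i, exists k, D 0 i = f k /\ `|k| <= d.
  move=> i; have /complex_realP [k Dk] := DRe i.
  exists k; split => //; apply: eigA; apply: eig_complex; rewrite -Dk.
  apply/eigenvalueP; exists (row i P).
    rewrite -row_mul Hdec !mulmxA PPt mul1mx.
    by rewrite mul_diag_mx; apply/rowP => j; rewrite !mxE.
  apply/eqP => /(congr1 (fun v => (v *m P^t*) 0 i)).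
  by rewrite -row_mul PPt mul0mx !mxE eqxx /= => /eqP; rewrite oner_eq0.
pose z := map_mx f x; pose w := z *m P^t*.
have wt : w^t* = P *m z^t* by rewrite /w trC_mul trmxCK.
have Hq : f ((x *m A *m x^T) 0 0) = \sum_j D 0 j * (w 0 j * (w 0 j)^*).
  have -> : f ((x *m A *m x^T) 0 0) = (map_mx f (x *m A *m x^T))  0 0 by rewrite [RHS]mxE.
  rewrite map_mxM map_mxM -/z -trC_real Hdec.
  rewrite !mulmxA -/w -[_ *m P *m _]mulmxA -wt mxE.
  apply: eq_bigr => j _; rewrite mul_mx_diag !mxE.
  by rewrite mulrCA mulrA.
have Hn : f ((x *m x^T) 0 0) = \sum_j (w 0 j * (w 0 j)^*).
  have -> : f ((x *m x^T) 0 0) = (map_mx f (x *m x^T)) 0 0 by rewrite [RHS]mxE.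
  rewrite map_mxM -/z -trC_real -[z in LHS]mulmx1 -PtP.
  rewrite mulmxA -/w -mulmxA -wt mxE.
  by apply: eq_bigr => j _; rewrite !mxE.
have ge0 j : 0 <= w 0 j * (w 0 j)^* by apply: mul_conjC_ge0.
rewrite ler_norml; apply/andP; split.
  rewrite -lecR rmorphN rmorphM /= Hq Hn mulr_sumr -mulrN1 mulr_suml.
  apply: ler_sum => j _; have [k [-> kd]] := DR j.
  rewrite mulrN1 -mulNr; apply: ler_wpM2r => //.
  rewrite -rmorphN lecR lerNl; have := ler_norm (-k); rewrite normrN => h.
  exact: le_trans h kd.
rewrite -lecR rmorphM /= Hq Hn mulr_sumr.
apply: ler_sum => j _; have [k [-> kd]] := DR j.
apply: ler_wpM2r => //.
by rewrite lecR; apply: le_trans kd; rewrite ler_norm.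
Qed.


Lemma split_l m k (a : 'I_m) : split (lshift k a) = inl a.
Proof. exact: (unsplitK (inl a)). Qed.
Lemma split_r m k (a : 'I_k) : split (rshift m a) = inr a.
Proof. exact: (unsplitK (inr a)). Qed.

Section Join.
Variables (n s : nat) (X : graph n).
Local Notation M := (adjmx R (gjoin X (edgeless s))).
Lemma adjLL a b : M (lshift s a) (lshift s b) = (X a b : nat)%:R.
Proof. by rewrite mxE /= /join_rel !split_l. Qed.
Lemma adjLR a b : M (lshift s a) (rshift n b) = 1.
Proof. by rewrite mxE /= /join_rel split_l split_r. Qed.
Lemma adjRL a b : M (rshift n a) (lshift s b) = 1.
Proof. by rewrite mxE /= /join_rel split_l split_r. Qed.
Lemma adjRR a b : M (rshift n a) (rshift n b) = 0.
Proof. by rewrite mxE /= /join_rel !split_r. Qed.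
End Join.

Lemma eig_bound m (B : 'M[R]_m) (c : R) mu :
  (forall i, \sum_j `|B j i| <= c) -> eigenvalue B mu -> `|mu| <= c.
Proof.
move=> Hc /eigenvalueP [v Hv vN0].
have [i0 Hi0] : exists i0, v 0 i0 != 0.
  apply/existsP; apply: contraR vN0 => /existsPn H.
  by apply/eqP/rowP => j; rewrite mxE; move: (H j); rewrite negbK => /eqP.
pose i := [arg max_(i > i0) `|v 0 i|]%O.
have imax : forall j, `|v 0 j| <= `|v 0 i|.
  by move=> j; rewrite /i; case: arg_maxP => // k _ Hk; apply: Hk.
have vi0 : 0 < `|v 0 i|.
  by apply: (lt_le_trans _ (imax i0)); rewrite normr_gt0.
rewrite -(ler_pM2r vi0) -normrM.
have -> : mu * v 0 i = (v *m B) 0 i by rewrite Hv !mxE.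
rewrite mxE; apply: (le_trans (ler_norm_sum _ _ _)).
apply: (@le_trans _ _ (\sum_j `|B j i| * `|v 0 i|)).
  apply: ler_sum => j _; rewrite normrM mulrC; apply: ler_wpM2l => //.
by rewrite -mulr_suml; apply: ler_wpM2r => //; apply: ltW.
Qed.

Lemma adj_colsum m (Y : graph m) i : \sum_j `|adjmx R Y j i| <= m%:R.
Proof.
apply: (@le_trans _ _ (\sum_(j < m) 1)).
  by apply: ler_sum => j _; rewrite mxE; case: (Y j i); rewrite ?normr1 ?normr0.
by rewrite sumr_const card_ord.
Qed.

Lemma lambda_ge m (Y : graph m) mu : eigenvalue (adjmx R Y) mu -> `|mu| <= lambda R Y.
Proof.
move=> Hmu; apply: sup_upper_bound; last by exists mu.
split; first by exists `|mu|, mu.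
exists m%:R => _ [x Hx <-]. exact: (@eig_bound m (adjmx R Y) m%:R x (@adj_colsum m Y) Hx).
Qed.

Lemma lambda_le m (Y : graph m) r : 0 <= r ->
  (forall mu, eigenvalue (adjmx R Y) mu -> `|mu| <= r) -> lambda R Y <= r.
Proof.
move=> r0 H; rewrite /lambda /specrad.
have [->|ne] := eqVneq ([set `|mu| | mu in [set mu : R | eigenvalue (adjmx R Y) mu]])%classic set0.
  by rewrite sup0.
apply: ge_sup; first exact/set0P.
by move=> _ [x Hx <-]; apply: H.
Qed.

Lemma adj_sym m (Y : graph m) : (adjmx R Y)^T = adjmx R Y.
Proof. by apply/matrixP => i j; rewrite !mxE gadj_sym. Qed.

Lemma CS n (x : 'rV[R]_n) :
  (\sum_a x 0 a) ^+ 2 <= n%:R * \sum_a x 0 a * x 0 a.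
Proof.
have J1 : (const_mx 1 : 'M[R]_n)^T = const_mx 1 by apply/matrixP => i j; rewrite !mxE.
have J2 : forall mu, eigenvalue (const_mx 1 : 'M[R]_n) mu -> `|mu| <= n%:R.
  move=> mu; apply: eig_bound => i.
  by under eq_bigr do rewrite mxE normr1; rewrite sumr_const card_ord.
have := @quad_bound _ _ _ J1 J2 x.
have -> : (x *m const_mx 1 *m x^T) 0 0 = (\sum_a x 0 a) ^+ 2.
  rewrite mxE expr2 mulr_sumr; apply: eq_bigr => b _.
  rewrite !mxE; congr (_ * _); apply: eq_bigr => a _; by rewrite ?mxE mulr1.
have -> : (x *m x^T) 0 0 = \sum_a x 0 a * x 0 a.
  by rewrite mxE; apply: eq_bigr => a _; rewrite mxE.
by move/(le_trans (ler_norm _)).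
Qed.

Lemma upper n s (H : graph n) (d r : R) mu : 0 <= d -> d <= r -> 0 < r ->
  r ^+ 2 = d * r + n%:R * s%:R ->
  (forall mu, eigenvalue (adjmx R H) mu -> `|mu| <= d) ->
  eigenvalue (adjmx R (gjoin H (edgeless s))) mu -> `|mu| <= r.
Proof.
move=> d0 dr r0 rE eigH /eigenvalueP [v Hv vN0].
case: (lerP `|mu| d) => [h|dmu]; first exact: le_trans h dr.
have mu0 : mu != 0 by rewrite -normr_gt0; apply: le_lt_trans dmu.
pose x : 'rV[R]_n := \row_a v 0 (lshift s a).
pose S := \sum_a x 0 a.
pose T := \sum_j v 0 (rshift n j).
pose N := \sum_a x 0 a * x 0 a.
have E1 : forall b, \sum_a x 0 a * (H a b : nat)%:R + T = mu * x 0 b.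
  move=> b; have := congr1 (fun w : 'rV_(n + s) => w 0 (lshift s b)) Hv.
  rewrite /= !mxE big_split_ord /= => <-; congr (_ + _).
    by apply: eq_bigr => a _; rewrite adjLL mxE.
  by apply: eq_bigr => j _; rewrite adjRL mulr1.
have E2 : forall j, S = mu * v 0 (rshift n j).
  move=> j; have := congr1 (fun w : 'rV_(n + s) => w 0 (rshift n j)) Hv.
  rewrite /= !mxE big_split_ord /= => <-.
  rewrite [X in _ = _ + X]big1 ?addr0; last by move=> k _; rewrite adjRR mulr0.
  by apply: eq_bigr => a _; rewrite adjLR mulr1 mxE.
have ET : mu * T = s%:R * S.
  rewrite /T mulr_sumr (eq_bigr (fun _ => S)); first by rewrite sumr_const card_ord mulr_natl.
  by move=> j _; rewrite (E2 j).
have EQ : (x *m adjmx R H *m x^T) 0 0 = mu * N - T * S.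
  rewrite mxE /N /S !mulr_sumr -sumrB; apply: eq_bigr => b _.
  rewrite [x^T _ _]mxE mulrA -mulrBl; congr (_ * _).
  by rewrite -(E1 b) addrK mxE; apply: eq_bigr => a _; rewrite [adjmx _ _ _ _]mxE.
have QB := @quad_bound _ _ _ (@adj_sym _ H) eigH x.
have EN : (x *m x^T) 0 0 = N by rewrite mxE; apply: eq_bigr => a _; rewrite [x^T _ _]mxE.
rewrite EN EQ in QB.
have Cs := @CS _ x; rewrite -/S -/N in Cs.
have N0 : 0 <= N by apply: sumr_ge0 => a _; rewrite -expr2 sqr_ge0.
have Npos : 0 < N.
  rewrite lt_def N0 andbT; apply: contra vN0 => /eqP N0'.
  have x0 : forall a, x 0 a = 0.
    move=> a; have := N0'; rewrite /N => /eqP; rewrite psumr_eq0; last first.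
      by move=> b _; rewrite -expr2 sqr_ge0.
    by move=> /allP /(_ a (mem_index_enum _)) /=; rewrite mulf_eq0 orbb => /eqP.
  apply/eqP/rowP => k; rewrite mxE; case: (split_ordP k) => a ->.
    by have := x0 a; rewrite mxE.
  have := E2 a; rewrite /S big1 ?x0 // => /esym/eqP; rewrite mulf_eq0 (negbTE mu0) /=.
  by move/eqP.
have e : mu * (mu * N - T * S) = mu ^+ 2 * N - (s%:R * S) * S.
  by rewrite -ET; ring.
have hq : mu * (mu * N - T * S) <= `|mu| * (d * N).
  apply: le_trans (ler_norm _) _; rewrite normrM; apply: ler_wpM2l => //.
rewrite e in hq.
have t2 : `|mu| ^+ 2 = mu ^+ 2 by rewrite real_normK ?num_real.
have t0 : 0 <= `|mu| by [].
have key : `|mu| ^+ 2 * N <= (`|mu| * d + n%:R * s%:R) * N.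
  have s0 : 0 <= s%:R :> R by rewrite ler0n.
  have Cs' : s%:R * S ^+ 2 <= s%:R * (n%:R * N) by apply: ler_wpM2l.
  rewrite t2; nra.
rewrite ler_pM2r // in key.
nra.
Qed.


Lemma deg_sum n (G : graph n) d : (forall v, #|[set w | G v w]%classic| = d) ->
  forall a, \sum_b ((G b a : nat)%:R : R) = d%:R.
Proof.
move=> Hd a; rewrite -natr_sum -(Hd a) -sum1_card.
congr (_%:R); rewrite [RHS]big_mkcond; apply: eq_bigr => b _.
have -> : (b \in [set w | G a w]%classic) = G a b.
  by apply/idP/idP => [/set_mem|/mem_set].
by rewrite gadj_sym; case: (G a b).
Qed.

Lemma lower n s (G : graph n) (d : nat) (r : R) : (0 < n)%N ->
  (forall v, #|[set w | G v w]%classic| = d) -> 0 < r ->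
  r ^+ 2 = d%:R * r + n%:R * s%:R ->
  eigenvalue (adjmx R (gjoin G (edgeless s))) r.
Proof.
move=> n0 Hd r0 rE; apply/eigenvalueP.
exists (\row_k match split k with inl _ => r | inr _ => n%:R end).
  apply/rowP => k; rewrite !mxE big_split_ord /=.
  case: (split_ordP k) => a ->.
    under eq_bigr do rewrite [X in X * _]mxE split_l adjLL.
    under [X in _ + X = _]eq_bigr do rewrite [X in X * _]mxE split_r adjRL mulr1.
    by rewrite -mulr_sumr (@deg_sum _ _ _ Hd) sumr_const card_ord -mulr_natr -expr2 rE; ring.
  under eq_bigr do rewrite [X in X * _]mxE split_l adjLR mulr1.
  under [X in _ + X = _]eq_bigr do rewrite [X in X * _]mxE split_r adjRR mulr0.
  rewrite [X in _ + X]big1 // addr0 sumr_const card_ord -mulr_natr; ring.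
apply/eqP => /rowP /(_ (lshift s (Ordinal n0))); rewrite !mxE split_l.
by move/eqP; rewrite gt_eqF.
Qed.

End Key.

Theorem theorem5p2 (R : realType) (n : nat) (G H : graph n) :
  regular G -> lambda R H <= lambda R G ->
  forall s : nat, (1 <= s)%N ->
    lambda R (gjoin H (edgeless s)) <= lambda R (gjoin G (edgeless s)).
Proof.
case: n G H => [|n] G H.
  move=> _ _ s _; rewrite /lambda.
  have -> : adjmx R (gjoin H (edgeless s)) = adjmx R (gjoin G (edgeless s)).
    apply/matrixP => i j; rewrite !mxE /= /join_rel.
    case: (split_ordP i) => [a _|a _]; first by move: (ltn_ord a); rewrite ltn0.
    by case: (split_ordP j) => [b _|b _]; first by move: (ltn_ord b); rewrite ltn0.
  by [].
move=> [d Hd] lamHG s s1.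
have d0 : (0 : R) <= d%:R by rewrite ler0n.
have eigG : forall mu, eigenvalue (adjmx R G) mu -> `|mu| <= d%:R.
  move=> mu; apply: eig_bound => i.
  under eq_bigr do rewrite mxE normr_nat.
  by rewrite (@deg_sum R _ _ _ Hd).
have lamG : lambda R G <= d%:R by apply: lambda_le.
have eigH : forall mu, eigenvalue (adjmx R H) mu -> `|mu| <= d%:R.
  by move=> mu /lambda_ge h; apply: le_trans h (le_trans lamHG lamG).
pose D : R := d%:R; pose Nn : R := n.+1%:R; pose Ss : R := s%:R.
have Nn0 : 0 < Nn by rewrite ltr0n.
have Ss0 : 0 < Ss by rewrite ltr0n.
pose q := Num.sqrt (D ^+ 2 + 4 * Nn * Ss).
have q0 : 0 <= q by apply: sqrtr_ge0.
have qE : q ^+ 2 = D ^+ 2 + 4 * Nn * Ss.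
  rewrite sqr_sqrtr //; apply: addr_ge0; first exact: sqr_ge0.
  by apply: mulr_ge0; [apply: mulr_ge0 => //; lra | exact: ltW].
pose r := (D + q) / 2.
have r0 : 0 < r by rewrite /r; nra.
have dr : D <= r by rewrite /r; nra.
have rE : r ^+ 2 = D * r + Nn * Ss by rewrite /r; nra.
apply: (@le_trans _ _ r).
  apply: lambda_le; first exact: ltW.
  by move=> mu; apply: (@upper R _ _ _ _ _ mu d0 dr r0 rE eigH).
have := @lambda_ge R _ _ _ (@lower R _ _ _ _ r (ltn0Sn n) Hd r0 rE); rewrite gtr0_norm //.
Qed.
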